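(* Let $(F,\tilde F)$ be a semigroupal functor from a semigroupal category to a $K$-linear tensor category. If $H^3(F)=0$, then every first order purely functorial deformation of $F$ extends to an $n$-th order purely functorial deformation for every $n$, and hence to a formal series purely functorial deformation. Likewise, if $(F,\tilde F,F_0)$ is a monoidal functor with $\mathbf H^3(F)=0$, every first order proper deformation of $F$ extends to a formal series proper deformation.
   Context: $X^n(F)=\mathrm{Nat}(F\circ{}^n\otimes,\ \otimes^n\circ F^n)$ with the bar-type coboundary $(\delta\varphi)_{A_1,\dots,A_{n+1}}=\lceil F(A_1)\otimes\varphi_{A_2,\dots}\rceil+\sum_{i=1}^n(-1)^i\lceil\varphi_{\dots,A_i\otimes A_{i+1},\dots}\rceil+(-1)^{n+1}\lceil\varphi_{A_1,\dots,A_n}\otimes F(A_{n+1})\rceil$, where ${}^n\otimes$/$\otimes^n$ are the left/right-parenthesized $n$-fold tensor products and $\lceil\cdot\rceil$ denotes padding with the canonical coherence isomorphisms built from associators, unit constraints, the structure maps of $F$ and their inverses; $H^\bullet(F)$ is its cohomology. For a monoidal functor $(F,\tilde F,F_0)$ (with $F_0:F(I)\to I$) between monoidal categories, the proper deformation complex $C^n(F)\subset X^n(F)$ consists of those $\varphi$ with $\varphi_{A_1,\dots,A_n}=0$ whenever some $A_i=I$; it is a subcomplex, with cohomology $\mathbf H^\bullet(F)$. An $n$-th order purely functorial deformation of $F$ is a semigroupal structure $\tilde F+\sum_{k=1}^nF^{(k)}\epsilon^k$ ($F^{(k)}\in X^2(F)$) on the same underlying functor into the trivial deformation of the target over $K[\epsilon]/\langle\epsilon^{n+1}\rangle$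 (hom-spaces tensored, undeformed structure maps); a formal series deformation is the analogous notion over $K[[\epsilon]]$. A proper deformation of a monoidal functor is a purely functorial deformation which together with the undeformed $F_0$ (i.e. $F_0\otimes1$) is a monoidal functor. *)

(* Defs.v *)
From HB Require Import structures.
From mathcomp Require Import all_boot all_algebra.
Set Implicit Arguments. Unset Strict Implicit. Unset Printing Implicit Defensive.
Import GRing.Theory.
Local Open Scope ring_scope.

Record SemiCatData (Ob : Type) (Hom : Ob -> Ob -> Type) := SemiCatData_ {
  comp : forall A B C, Hom B C -> Hom A B -> Hom A C;
  idm : forall A, Hom A A;
  tens : Ob -> Ob -> Ob;
  tensm : forall A B A' B', Hom A A' -> Hom B B' -> Hom (tens A B) (tens A' B');
  asc : forall A B C, Hom (tens (tens A B) C) (tens A (tens B C));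
  asci : forall A B C, Hom (tens A (tens B C)) (tens (tens A B) C) }.
Arguments comp {Ob Hom} s {A B C}.
Arguments idm {Ob Hom} s A.
Arguments tens {Ob Hom} s.
Arguments tensm {Ob Hom} s {A B A' B'}.
Arguments asc {Ob Hom} s A B C.
Arguments asci {Ob Hom} s A B C.

Definition semicat_laws Ob (Hom : Ob -> Ob -> Type) (s : SemiCatData Hom) : Prop :=
  (forall A B C D (h : Hom C D) (g : Hom B C) (f : Hom A B),
      comp s h (comp s g f) = comp s (comp s h g) f) /\
  (forall A B (f : Hom A B), comp s (idm s B) f = f) /\
  (forall A B (f : Hom A B), comp s f (idm s A) = f) /\
  (forall A B, tensm s (idm s A) (idm s B) = idm s (tens s A B)) /\
  (forall A B C A' B' C' (g : Hom B C) (f : Hom A B) (g' : Hom B' C') (f' : Hom A' B'),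
      tensm s (comp s g f) (comp s g' f') = comp s (tensm s g g') (tensm s f f')) /\
  (forall A B C, comp s (asci s A B C) (asc s A B C) = idm s _) /\
  (forall A B C, comp s (asc s A B C) (asci s A B C) = idm s _) /\
  (forall A B C A' B' C' (f : Hom A A') (g : Hom B B') (h : Hom C C'),
      comp s (asc s A' B' C') (tensm s (tensm s f g) h)
      = comp s (tensm s f (tensm s g h)) (asc s A B C)) /\
  (forall A B C D,
      comp s (asc s A B (tens s C D)) (asc s (tens s A B) C D)
      = comp s (tensm s (idm s A) (asc s B C D))
          (comp s (asc s A (tens s B C) D) (tensm s (asc s A B C) (idm s D)))).

Record MonCatData (Ob : Type) (Hom : Ob -> Ob -> Type) := MonCatData_ {
  msemi : SemiCatData Hom;
  unit : Ob;
  lu : forall A, Hom (tens msemi unit A) A;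
  lui : forall A, Hom A (tens msemi unit A);
  ru : forall A, Hom (tens msemi A unit) A;
  rui : forall A, Hom A (tens msemi A unit) }.
Arguments msemi {Ob Hom} m.
Arguments unit {Ob Hom} m.
Arguments lu {Ob Hom} m A.
Arguments lui {Ob Hom} m A.
Arguments ru {Ob Hom} m A.
Arguments rui {Ob Hom} m A.

Definition moncat_laws Ob (Hom : Ob -> Ob -> Type) (m : MonCatData Hom) : Prop :=
  let s := msemi m in
  semicat_laws s /\
  (forall A, comp s (lui m A) (lu m A) = idm s _) /\
  (forall A, comp s (lu m A) (lui m A) = idm s _) /\
  (forall A, comp s (rui m A) (ru m A) = idm s _) /\
  (forall A, comp s (ru m A) (rui m A) = idm s _) /\
  (forall A A' (f : Hom A A'),
      comp s (lu m A') (tensm s (idm s (unit m)) f) = comp s f (lu m A)) /\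
  (forall A A' (f : Hom A A'),
      comp s (ru m A') (tensm s f (idm s (unit m))) = comp s f (ru m A)) /\
  (forall A B,
      comp s (tensm s (idm s A) (lu m B)) (asc s A (unit m) B)
      = tensm s (ru m A) (idm s B)).

Definition bilin_laws (K : fieldType) Ob (Hom : Ob -> Ob -> lmodType K)
    (s : SemiCatData (fun A B => Hom A B : Type)) : Prop :=
  (forall A B C (g : Hom B C) (a : K) (f1 f2 : Hom A B),
      comp s g (a *: f1 + f2) = a *: comp s g f1 + comp s g f2) /\
  (forall A B C (f : Hom A B) (a : K) (g1 g2 : Hom B C),
      comp s (a *: g1 + g2) f = a *: comp s g1 f + comp s g2 f) /\
  (forall A B A' B' (g : Hom B B') (a : K) (f1 f2 : Hom A A'),
      tensm s (a *: f1 + f2) g = a *: tensm s f1 g + tensm s f2 g) /\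
  (forall A B A' B' (f : Hom A A') (a : K) (g1 g2 : Hom B B'),
      tensm s f (a *: g1 + g2) = a *: tensm s f g1 + tensm s f g2).

Record SemiCat := SemiCat_ {
  sob : Type;
  shom : sob -> sob -> Type;
  sdat : SemiCatData shom;
  slaws : semicat_laws sdat }.

Record MonCat := MonCat_ {
  mob : Type;
  mhom : mob -> mob -> Type;
  mdat : MonCatData mhom;
  mlaws : moncat_laws mdat }.

Definition semi_of (C : MonCat) : SemiCat :=
  @SemiCat_ (mob C) (@mhom C) (msemi (mdat C)) (proj1 (mlaws C)).

Record LinMonCat (K : fieldType) := LinMonCat_ {
  lob : Type;
  lhom : lob -> lob -> lmodType K;
  ldat : MonCatData (fun A B => lhom A B : Type);
  llaws : moncat_laws ldat;
  llin : bilin_laws (msemi ldat) }.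

Section SemiFunctors.
Variable K : fieldType.
Variable C : SemiCat.
Variable D : LinMonCat K.

Local Notation CH := (@shom C).
Local Notation cc := (comp (sdat C)).
Local Notation cid := (idm (sdat C)).
Local Notation ct := (tens (sdat C)).
Local Notation ctm := (tensm (sdat C)).
Local Notation casc := (asc (sdat C)).

Local Notation DH := (@lhom K D).
Local Notation dc := (comp (msemi (ldat D))).
Local Notation did := (idm (msemi (ldat D))).
Local Notation dt := (tens (msemi (ldat D))).
Local Notation dtm := (tensm (msemi (ldat D))).
Local Notation dasc := (asc (msemi (ldat D))).

Record SemiFunctor := SemiFunctor_ {
  Fob : sob C -> lob D;
  Fmor : forall A B, CH A B -> DH (Fob A) (Fob B);
  Ftil : forall A B, DH (Fob (ct A B)) (dt (Fob A) (Fob B));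
  Ftinv : forall A B, DH (dt (Fob A) (Fob B)) (Fob (ct A B));
  fm_id : forall A, Fmor (cid A) = did (Fob A);
  fm_comp : forall A B E (g : CH B E) (f : CH A B), Fmor (cc g f) = dc (Fmor g) (Fmor f);
  ft_nat : forall A B A' B' (f : CH A A') (g : CH B B'),
      dc (Ftil A' B') (Fmor (ctm f g)) = dc (dtm (Fmor f) (Fmor g)) (Ftil A B);
  ft_inv1 : forall A B, dc (Ftinv A B) (Ftil A B) = did _;
  ft_inv2 : forall A B, dc (Ftil A B) (Ftinv A B) = did _;
  ft_hex : forall A B E,
      dc (dasc (Fob A) (Fob B) (Fob E)) (dc (dtm (Ftil A B) (did (Fob E))) (Ftil (ct A B) E))
      = dc (dtm (did (Fob A)) (Ftil B E)) (dc (Ftil A (ct B E)) (Fmor (casc A B E))) }.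

Variable F : SemiFunctor.
Local Notation FO := (Fob F).
Local Notation FM := (Fmor F).
Local Notation FT := (Ftil F).

(* Cochain spaces X^2, X^3, X^4 (families; naturality is a separate predicate).
   Source: left-parenthesized tensor, target: right-parenthesized tensor. *)
Definition fam2 := forall X Y : sob C, DH (FO (ct X Y)) (dt (FO X) (FO Y)).
Definition fam3 := forall X Y Z : sob C,
  DH (FO (ct (ct X Y) Z)) (dt (FO X) (dt (FO Y) (FO Z))).
Definition fam4 := forall X Y Z W : sob C,
  DH (FO (ct (ct (ct X Y) Z) W)) (dt (FO X) (dt (FO Y) (dt (FO Z) (FO W)))).

Definition natural2 (p : fam2) : Prop :=
  forall X Y X' Y' (f : CH X X') (g : CH Y Y'),
    dc (p X' Y') (FM (ctm f g)) = dc (dtm (FM f) (FM g)) (p X Y).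

Definition natural3 (p : fam3) : Prop :=
  forall X Y Z X' Y' Z' (f : CH X X') (g : CH Y Y') (h : CH Z Z'),
    dc (p X' Y' Z') (FM (ctm (ctm f g) h))
    = dc (dtm (FM f) (dtm (FM g) (FM h))) (p X Y Z).

(* coboundary X^2 -> X^3, padded with canonical coherence isomorphisms *)
Definition delta2 (p : fam2) : fam3 := fun X Y Z =>
  let t1 := dc (dtm (did (FO X)) (p Y Z)) (dc (FT X (ct Y Z)) (FM (casc X Y Z))) in
  let t2 := dc (dasc (FO X) (FO Y) (FO Z))
                (dc (dtm (FT X Y) (did (FO Z))) (p (ct X Y) Z)) in
  let t3 := dc (dtm (did (FO X)) (FT Y Z)) (dc (p X (ct Y Z)) (FM (casc X Y Z))) in
  let t4 := dc (dasc (FO X) (FO Y) (FO Z))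
                (dc (dtm (p X Y) (did (FO Z))) (FT (ct X Y) Z)) in
  t1 - t2 + t3 - t4.

(* coboundary X^3 -> X^4, padded with canonical coherence isomorphisms *)
Definition delta3 (p : fam3) : fam4 := fun X Y Z W =>
  let t0 := dc (dtm (did (FO X)) (p Y Z W))
               (dc (FT X (ct (ct Y Z) W))
                   (FM (cc (casc X (ct Y Z) W) (ctm (casc X Y Z) (cid W))))) in
  let t1 := dc (dasc (FO X) (FO Y) (dt (FO Z) (FO W)))
               (dc (dtm (FT X Y) (did (dt (FO Z) (FO W)))) (p (ct X Y) Z W)) in
  let t2 := dc (dtm (did (FO X)) (dasc (FO Y) (FO Z) (FO W)))
               (dc (dtm (did (FO X)) (dtm (FT Y Z) (did (FO W))))
                   (dc (p X (ct Y Z) W) (FM (ctm (casc X Y Z) (cid W))))) in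
  let t3 := dc (dtm (did (FO X)) (dtm (did (FO Y)) (FT Z W)))
               (dc (p X Y (ct Z W)) (FM (casc (ct X Y) Z W))) in
  let t4 := dc (dtm (did (FO X)) (dasc (FO Y) (FO Z) (FO W)))
               (dc (dasc (FO X) (dt (FO Y) (FO Z)) (FO W))
                   (dc (dtm (p X Y Z) (did (FO W))) (FT (ct (ct X Y) Z) W))) in
  t0 - t1 + t2 - t3 + t4.

Definition H3_vanishes : Prop :=
  forall p : fam3, natural3 p -> (forall X Y Z W, delta3 p X Y Z W = 0) ->
    exists q : fam2, natural2 q /\ (forall X Y Z, delta2 q X Y Z = p X Y Z).

(* The structure sequence F~ + sum_{k>=1} psi k eps^k *)
Definition defseq (psi : nat -> fam2) (k : nat) : fam2 :=
  if k is 0 then FT else psi k.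

(* coefficient of eps^m in the associativity (hexagon) axiom of the deformed structure *)
Definition hex_coef (s : nat -> fam2) (m : nat) : Prop :=
  forall X Y Z,
    \sum_(i < m.+1)
       dc (dasc (FO X) (FO Y) (FO Z))
          (dc (dtm (s i X Y) (did (FO Z))) (s (m - i)%N (ct X Y) Z))
    = \sum_(i < m.+1)
       dc (dtm (did (FO X)) (s i Y Z))
          (dc (s (m - i)%N X (ct Y Z)) (FM (casc X Y Z))).

(* n-th order purely functorial deformation F~ + sum_{k=1}^n psi k eps^k
   (only psi 1, ..., psi n are relevant) *)
Definition is_deformation (n : nat) (psi : nat -> fam2) : Prop :=
  (forall k, (0 < k <= n)%N -> natural2 (psi k)) /\
  (forall m, (m <= n)%N -> hex_coef (defseq psi) m).

Definition is_series_deformation (psi : nat -> fam2) : Prop :=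
  forall n, is_deformation n psi.

Definition is_first_order (phi : fam2) : Prop := is_deformation 1 (fun _ => phi).

Definition extends (phi : fam2) (psi : nat -> fam2) : Prop :=
  forall X Y, psi 1%N X Y = phi X Y.

End SemiFunctors.

Section MonFunctors.
Variable K : fieldType.
Variable C : MonCat.
Variable D : LinMonCat K.

Local Notation DH := (@lhom K D).
Local Notation dc := (comp (msemi (ldat D))).
Local Notation did := (idm (msemi (ldat D))).
Local Notation dtm := (tensm (msemi (ldat D))).

Record MonFunctor := MonFunctor_ {
  mfs : SemiFunctor (semi_of C) D;
  f0 : DH (Fob mfs (unit (mdat C))) (unit (ldat D));
  f0i : DH (unit (ldat D)) (Fob mfs (unit (mdat C)));
  f0_inv1 : dc f0i f0 = did _;
  f0_inv2 : dc f0 f0i = did _;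
  f_lunit : forall A,
      dc (lu (ldat D) (Fob mfs A))
         (dc (dtm f0 (did (Fob mfs A))) (Ftil mfs (unit (mdat C)) A))
      = Fmor mfs (lu (mdat C) A);
  f_runit : forall A,
      dc (ru (ldat D) (Fob mfs A))
         (dc (dtm (did (Fob mfs A)) f0) (Ftil mfs A (unit (mdat C))))
      = Fmor mfs (ru (mdat C) A) }.

Variable F : MonFunctor.
Local Notation FS := (mfs F).
Local Notation I := (unit (mdat C)).

Definition proper2 (p : fam2 FS) : Prop :=
  (forall Y, p I Y = 0) /\ (forall X, p X I = 0).
Definition proper3 (p : fam3 FS) : Prop :=
  (forall Y Z, p I Y Z = 0) /\ (forall X Z, p X I Z = 0) /\ (forall X Y, p X Y I = 0).

Definition properH3_vanishes : Prop :=
  forall p : fam3 FS, natural3 p -> proper3 p ->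
    (forall X Y Z W, delta3 p X Y Z W = 0) ->
    exists q : fam2 FS, natural2 q /\ proper2 q /\ (forall X Y Z, delta2 q X Y Z = p X Y Z).

(* coefficient (k >= 1) of eps^k in the unit axioms for (F~ + sum psi k eps^k, F_0 (x) 1) *)
Definition unit_coef (psi : nat -> fam2 FS) (k : nat) : Prop :=
  (forall A, dc (lu (ldat D) (Fob FS A)) (dc (dtm (f0 F) (did (Fob FS A))) (psi k I A)) = 0) /\
  (forall A, dc (ru (ldat D) (Fob FS A)) (dc (dtm (did (Fob FS A)) (f0 F)) (psi k A I)) = 0).

Definition is_proper_deformation (n : nat) (psi : nat -> fam2 FS) : Prop :=
  is_deformation n psi /\ (forall k, (0 < k <= n)%N -> unit_coef psi k).

Definition is_proper_series_deformation (psi : nat -> fam2 FS) : Prop :=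
  forall n, is_proper_deformation n psi.

Definition is_proper_first_order (phi : fam2 FS) : Prop :=
  is_proper_deformation 1 (fun _ => phi).

End MonFunctors.

(* Main.v *)
Require Import Defs.
From mathcomp Require Import all_boot all_algebra zify.
From Stdlib Require Import ClassicalEpsilon.
Set Implicit Arguments. Unset Strict Implicit. Unset Printing Implicit Defensive.
Import GRing.Theory.
Local Open Scope ring_scope.

Definition Sig (V : zmodType) (N : nat) (f : nat -> nat -> nat -> V) : V :=
  \sum_(i < N.+1) \sum_(j < N.+1) \sum_(k < N.+1)
     (if (i + j + k == N)%N then f i j k else 0).

Lemma Sig_swap (V : zmodType) N (f : nat -> nat -> nat -> V) :
  Sig N (fun i j k => f j i k) = Sig N f.
Proof.
rewrite /Sig exchange_big /=; apply: eq_bigr => a _; apply: eq_bigr => b _.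
by apply: eq_bigr => c _; rewrite (addnC b a).
Qed.

Lemma Sig_cyc (V : zmodType) N (f : nat -> nat -> nat -> V) :
  Sig N (fun i j k => f j k i) = Sig N f.
Proof.
rewrite /Sig exchange_big /=; apply: eq_bigr => a _.
rewrite exchange_big /=; apply: eq_bigr => b _; apply: eq_bigr => c _.
by have -> : (c + a + b = a + b + c)%N by lia.
Qed.

Lemma Sig_conv (V : zmodType) N (f : nat -> nat -> nat -> V) :
  \sum_(i < N.+1) \sum_(j < (N - i).+1) f i j (N - i - j)%N = Sig N f.
Proof.
rewrite /Sig; apply: eq_bigr => i _.
have hi : (i <= N)%N by rewrite -ltnS.
have hw : ((N - i).+1 <= N.+1)%N by lia.
rewrite (big_ord_widen _ (fun j => f i j (N - i - j)%N) hw) big_mkcond /=.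
apply: eq_bigr => j _.
case: (leqP (i + j) N) => hij.
- have -> : (j < (N - i).+1)%N by lia.
  have hk : (N - i - j < N.+1)%N by lia.
  rewrite (bigD1 (Ordinal hk)) //=.
  have -> : (i + j + (N - i - j) == N)%N by apply/eqP; lia.
  rewrite big1 ?addr0 // => k hk'.
  case: eqP => // h; exfalso; move/eqP: hk'; apply; apply/val_inj => /=; lia.
- have -> : (j < (N - i).+1)%N = false by lia.
  rewrite big1 // => k _; case: eqP => // h; lia.
Qed.

Lemma Sig_B (V : zmodType) N (f g : nat -> nat -> nat -> V) :
  Sig N (fun i j k => f i j k - g i j k) = Sig N f - Sig N g.
Proof.
rewrite /Sig -sumrB; apply: eq_bigr => i _; rewrite -sumrB; apply: eq_bigr => j _.
rewrite -sumrB; apply: eq_bigr => k _; by case: ifP => _; rewrite ?subr0.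
Qed.

Lemma Sig_D (V : zmodType) N (f g : nat -> nat -> nat -> V) :
  Sig N (fun i j k => f i j k + g i j k) = Sig N f + Sig N g.
Proof.
rewrite /Sig -big_split; apply: eq_bigr => i _; rewrite -big_split; apply: eq_bigr => j _.
rewrite -big_split; apply: eq_bigr => k _; by case: ifP => _ /=; rewrite ?addr0.
Qed.

Lemma L1 (V : zmodType) (a0 a1 a2 a3 a4 b0 b1 b2 b3 b4 : V) :
 (a0 - b0) - (a1 - b1) + (a2 - b2) - (a3 - b3) + (a4 - b4) = (a0 - a1 + a2 - a3 + a4) - (b0 - b1 + b2 - b3 + b4).
Proof.
rewrite ?opprD ?opprB ?opprK !addrA.
rewrite -?(addrAC _ (-b0)).
rewrite -?(addrAC _ b1).
rewrite -?(addrAC _ (-b2)).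
rewrite -?(addrAC _ b3).
rewrite -?(addrAC _ (-b4)).
done.
Qed.
Lemma L2 (V : zmodType) (a0 a1 a2 a3 a4 b0 b1 b2 b3 b4 : V) :
 b0 = b3 -> b1 = a3 -> a0 = b2 -> a4 = a1 -> a2 = b4 ->
 (a0 - a1 + a2 - a3 + a4) - (b0 - b1 + b2 - b3 + b4) = 0.
Proof.
move=> -> -> -> -> ->.
rewrite ?opprD ?opprB ?opprK !addrA.
rewrite -?(addrAC _ (-a1)) -?(addrAC _ a1) addrK.
rewrite -?(addrAC _ (-a3)) -?(addrAC _ a3) addrK.
rewrite -?(addrAC _ (-b3)) -?(addrAC _ b3) addrK.
rewrite -?(addrAC _ (-b4)) -?(addrAC _ b4) addrK.
by rewrite subrr.
Qed.

Lemma L3 (V : zmodType) (a b c d mL mR : V) :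
  d - a + c - b = (0 + mL + 0) - (0 + mR + 0) -> (a + mL + b) - (c + mR + d) = 0.
Proof.
rewrite !add0r !addr0 => h.
have -> : mL = d - a + c - b + mR by rewrite h subrK.
rewrite ?opprD ?opprB ?opprK !addrA.
rewrite -?(addrAC _ (-d)) -?(addrAC _ d) addrK.
rewrite -?(addrAC _ (-b)) -?(addrAC _ b) addrK.
rewrite -?(addrAC _ (-c)) -?(addrAC _ c) addrK.
rewrite -?(addrAC _ (-mR)) -?(addrAC _ mR) addrK.
by rewrite subrr.
Qed.
Lemma peel (V : zmodType) m (f : nat -> V) :
  \sum_(i < m.+2) f i = f 0%N + \sum_(i < m) f i.+1 + f m.+1.
Proof. by rewrite big_ord_recl big_ord_recr /= addrA. Qed.

Lemma sumrDD (V : zmodType) n (f g : 'I_n -> V) :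
  \sum_(i < n) (f i + g i) = \sum_(i < n) f i + \sum_(i < n) g i.
Proof. by rewrite big_split. Qed.

Section Basics.
Variable K : fieldType.
Variable C : SemiCat.
Variable D : LinMonCat K.

Local Notation CH := (@shom C).
Local Notation cc := (Defs.comp (sdat C)).
Local Notation cid := (idm (sdat C)).
Local Notation ct := (tens (sdat C)).
Local Notation ctm := (tensm (sdat C)).
Local Notation casc := (asc (sdat C)).

Local Notation DH := (@lhom K D).
Local Notation dc := (Defs.comp (msemi (ldat D))).
Local Notation did := (idm (msemi (ldat D))).
Local Notation dt := (tens (msemi (ldat D))).
Local Notation dtm := (tensm (msemi (ldat D))).
Local Notation dasc := (asc (msemi (ldat D))).

Lemma dcA A B E G (h : DH E G) (g : DH B E) (f : DH A B) : dc h (dc g f) = dc (dc h g) f.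
Proof. by case: (llaws D) => [[L _] _]; apply: L. Qed.
Lemma dc1l A B (f : DH A B) : dc (did B) f = f.
Proof. by case: (llaws D) => [[_ [L _]] _]; apply: L. Qed.
Lemma dc1r A B (f : DH A B) : dc f (did A) = f.
Proof. by case: (llaws D) => [[_ [_ [L _]]] _]; apply: L. Qed.
Lemma dtm11 A B : dtm (did A) (did B) = did (dt A B).
Proof. by case: (llaws D) => [[_ [_ [_ [L _]]]] _]; apply: L. Qed.
Lemma dtmc A B E A' B' E' (g : DH B E) (f : DH A B) (g' : DH B' E') (f' : DH A' B') :
  dtm (dc g f) (dc g' f') = dc (dtm g g') (dtm f f').
Proof. by case: (llaws D) => [[_ [_ [_ [_ [L _]]]]] _]; apply: L. Qed.
Lemma dasc_nat A B E A' B' E' (f : DH A A') (g : DH B B') (h : DH E E') :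
  dc (dasc A' B' E') (dtm (dtm f g) h) = dc (dtm f (dtm g h)) (dasc A B E).
Proof. by case: (llaws D) => [[_ [_ [_ [_ [_ [_ [_ [L _]]]]]]]] _]; apply: L. Qed.
Lemma dpent A B E G :
  dc (dasc A B (dt E G)) (dasc (dt A B) E G)
  = dc (dtm (did A) (dasc B E G)) (dc (dasc A (dt B E) G) (dtm (dasc A B E) (did G))).
Proof. by case: (llaws D) => [[_ [_ [_ [_ [_ [_ [_ [_ L]]]]]]]] _]; apply: L. Qed.

Lemma ccA A B E G (h : CH E G) (g : CH B E) (f : CH A B) : cc h (cc g f) = cc (cc h g) f.
Proof. by case: (slaws C) => [L _]; apply: L. Qed.
Lemma casc_nat A B E A' B' E' (f : CH A A') (g : CH B B') (h : CH E E') :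
  cc (casc A' B' E') (ctm (ctm f g) h) = cc (ctm f (ctm g h)) (casc A B E).
Proof. by case: (slaws C) => [_ [_ [_ [_ [_ [_ [_ [L _]]]]]]]]; apply: L. Qed.
Lemma cpent A B E G :
  cc (casc A B (ct E G)) (casc (ct A B) E G)
  = cc (ctm (cid A) (casc B E G)) (cc (casc A (ct B E) G) (ctm (casc A B E) (cid G))).
Proof. by case: (slaws C) => [_ [_ [_ [_ [_ [_ [_ [_ L]]]]]]]]; apply: L. Qed.

Lemma dcDr A B E (g : DH B E) (f1 f2 : DH A B) : dc g (f1 + f2) = dc g f1 + dc g f2.
Proof. by case: (llin D) => [L _]; have := L _ _ _ g 1 f1 f2; rewrite !scale1r. Qed.
Lemma dcDl A B E (f : DH A B) (g1 g2 : DH B E) : dc (g1 + g2) f = dc g1 f + dc g2 f.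
Proof. by case: (llin D) => [_ [L _]]; have := L _ _ _ f 1 g1 g2; rewrite !scale1r. Qed.
Lemma dtmDl A B A' B' (g : DH B B') (f1 f2 : DH A A') : dtm (f1 + f2) g = dtm f1 g + dtm f2 g.
Proof. by case: (llin D) => [_ [_ [L _]]]; have := L _ _ _ _ g 1 f1 f2; rewrite !scale1r. Qed.
Lemma dtmDr A B A' B' (f : DH A A') (g1 g2 : DH B B') : dtm f (g1 + g2) = dtm f g1 + dtm f g2.
Proof. by case: (llin D) => [_ [_ [_ L]]]; have := L _ _ _ _ f 1 g1 g2; rewrite !scale1r. Qed.

Lemma zero_of (V : zmodType) (x : V) : x = x + x -> x = 0.
Proof. by move=> h; apply: (@addrI _ x); rewrite addr0 -h. Qed.

Lemma dc0r A B E (g : DH B E) : dc g (0 : DH A B) = 0.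
Proof. by apply: zero_of; rewrite -dcDr addr0. Qed.
Lemma dc0l A B E (f : DH A B) : dc (0 : DH B E) f = 0.
Proof. by apply: zero_of; rewrite -dcDl addr0. Qed.
Lemma dtm0l A B A' B' (g : DH B B') : dtm (0 : DH A A') g = 0.
Proof. by apply: zero_of; rewrite -dtmDl addr0. Qed.
Lemma dtm0r A B A' B' (f : DH A A') : dtm f (0 : DH B B') = 0.
Proof. by apply: zero_of; rewrite -dtmDr addr0. Qed.

Lemma neg_of (V : zmodType) (x y : V) : x + y = 0 -> y = - x.
Proof. by move=> h; apply: (@addrI _ x); rewrite h addrN. Qed.

Lemma dcNr A B E (g : DH B E) (f : DH A B) : dc g (- f) = - dc g f.
Proof. by apply: neg_of; rewrite -dcDr addrN dc0r. Qed.
Lemma dcNl A B E (f : DH A B) (g : DH B E) : dc (- g) f = - dc g f.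
Proof. by apply: neg_of; rewrite -dcDl addrN dc0l. Qed.
Lemma dtmNl A B A' B' (g : DH B B') (f : DH A A') : dtm (- f) g = - dtm f g.
Proof. by apply: neg_of; rewrite -dtmDl addrN dtm0l. Qed.
Lemma dtmNr A B A' B' (f : DH A A') (g : DH B B') : dtm f (- g) = - dtm f g.
Proof. by apply: neg_of; rewrite -dtmDr addrN dtm0r. Qed.

Lemma dcBr A B E (g : DH B E) (f1 f2 : DH A B) : dc g (f1 - f2) = dc g f1 - dc g f2.
Proof. by rewrite dcDr dcNr. Qed.
Lemma dcBl A B E (f : DH A B) (g1 g2 : DH B E) : dc (g1 - g2) f = dc g1 f - dc g2 f.
Proof. by rewrite dcDl dcNl. Qed.

Lemma dc_sumr A B E (g : DH B E) n (f : 'I_n -> DH A B) :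
  dc g (\sum_(i < n) f i) = \sum_(i < n) dc g (f i).
Proof. by elim/big_rec2: _ => [|i y1 y2 _ <-]; rewrite ?dc0r ?dcDr. Qed.
Lemma dc_suml A B E (f : DH A B) n (g : 'I_n -> DH B E) :
  dc (\sum_(i < n) g i) f = \sum_(i < n) dc (g i) f.
Proof. by elim/big_rec2: _ => [|i y1 y2 _ <-]; rewrite ?dc0l ?dcDl. Qed.

Lemma dtmBl A B A' B' (g : DH B B') (f1 f2 : DH A A') : dtm (f1 - f2) g = dtm f1 g - dtm f2 g.
Proof. by rewrite dtmDl dtmNl. Qed.
Lemma dtmBr A B A' B' (f : DH A A') (g1 g2 : DH B B') : dtm f (g1 - g2) = dtm f g1 - dtm f g2.
Proof. by rewrite dtmDr dtmNr. Qed.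
Lemma dtm_suml A B A' B' (g : DH B B') n (f : 'I_n -> DH A A') :
  dtm (\sum_(i < n) f i) g = \sum_(i < n) dtm (f i) g.
Proof. by elim/big_rec2: _ => [|i y1 y2 _ <-]; rewrite ?dtm0l ?dtmDl. Qed.
Lemma dtm_sumr A B A' B' (f : DH A A') n (g : 'I_n -> DH B B') :
  dtm f (\sum_(i < n) g i) = \sum_(i < n) dtm f (g i).
Proof. by elim/big_rec2: _ => [|i y1 y2 _ <-]; rewrite ?dtm0r ?dtmDr. Qed.

Lemma dtm1c A B E (g : DH B E) (f : DH A B) G :
  dtm (did G) (dc g f) = dc (dtm (did G) g) (dtm (did G) f).
Proof. by rewrite -dtmc dc1l. Qed.
Lemma dtmc1 A B E (g : DH B E) (f : DH A B) G :
  dtm (dc g f) (did G) = dc (dtm g (did G)) (dtm f (did G)).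
Proof. by rewrite -dtmc dc1l. Qed.


Lemma dc_rw A B E E' G (a : DH E G) (b : DH B E) (c : DH E' G) (d : DH B E') (r : DH A B) :
  dc a b = dc c d -> dc a (dc b r) = dc c (dc d r).
Proof. by move=> h; rewrite !dcA h. Qed.

Lemma xch A B A' B' (w : DH A A') (t : DH B B') :
  dc (dtm (did A') t) (dtm w (did B)) = dc (dtm w (did B')) (dtm (did A) t).
Proof. by rewrite -!dtmc !dc1l !dc1r. Qed.


Variable F : SemiFunctor C D.
Local Notation FO := (Fob F).
Local Notation FM := (Fmor F).
Local Notation FT := (Ftil F).

Lemma fmid A : FM (cid A) = did (FO A). Proof. exact: fm_id. Qed.
Lemma fmc A B E (g : CH B E) (f : CH A B) : FM (cc g f) = dc (FM g) (FM f).
Proof. exact: fm_comp. Qed.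

Definition Lf (u v : fam2 F) : fam3 F := fun X Y Z =>
  dc (dasc (FO X) (FO Y) (FO Z)) (dc (dtm (u X Y) (did (FO Z))) (v (ct X Y) Z)).
Definition Rf (u v : fam2 F) : fam3 F := fun X Y Z =>
  dc (dtm (did (FO X)) (u Y Z)) (dc (v X (ct Y Z)) (FM (casc X Y Z))).

Definition D0 (w : fam2 F) (p : fam3 F) : fam4 F := fun X Y Z W =>
  dc (dtm (did (FO X)) (p Y Z W))
     (dc (w X (ct (ct Y Z) W))
         (FM (cc (casc X (ct Y Z) W) (ctm (casc X Y Z) (cid W))))).
Definition D1 (w : fam2 F) (p : fam3 F) : fam4 F := fun X Y Z W =>
  dc (dasc (FO X) (FO Y) (dt (FO Z) (FO W)))
     (dc (dtm (w X Y) (did (dt (FO Z) (FO W)))) (p (ct X Y) Z W)).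
Definition D2 (w : fam2 F) (p : fam3 F) : fam4 F := fun X Y Z W =>
  dc (dtm (did (FO X)) (dasc (FO Y) (FO Z) (FO W)))
     (dc (dtm (did (FO X)) (dtm (w Y Z) (did (FO W))))
         (dc (p X (ct Y Z) W) (FM (ctm (casc X Y Z) (cid W))))).
Definition D3 (w : fam2 F) (p : fam3 F) : fam4 F := fun X Y Z W =>
  dc (dtm (did (FO X)) (dtm (did (FO Y)) (w Z W)))
     (dc (p X Y (ct Z W)) (FM (casc (ct X Y) Z W))).
Definition D4 (w : fam2 F) (p : fam3 F) : fam4 F := fun X Y Z W =>
  dc (dtm (did (FO X)) (dasc (FO Y) (FO Z) (FO W)))
     (dc (dasc (FO X) (dt (FO Y) (FO Z)) (FO W))
         (dc (dtm (p X Y Z) (did (FO W))) (w (ct (ct X Y) Z) W))).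
Definition Dg (w : fam2 F) (p : fam3 F) : fam4 F := fun X Y Z W =>
  D0 w p X Y Z W - D1 w p X Y Z W + D2 w p X Y Z W - D3 w p X Y Z W + D4 w p X Y Z W.

Lemma delta3E p X Y Z W : delta3 p X Y Z W = Dg FT p X Y Z W.
Proof. by []. Qed.

Section Pairs.
Variables (w t u : fam2 F) (X Y Z W : sob C).

Lemma pair_c : D0 w (Lf t u) X Y Z W = D2 t (Rf u w) X Y Z W.
Proof. by rewrite /D0 /D2 /Lf /Rf !dtm1c fmc -!dcA. Qed.

Lemma pair_a : natural2 w -> D0 w (Rf t u) X Y Z W = D3 t (Rf u w) X Y Z W.
Proof.
move=> nw; rewrite /D0 /D3 /Rf !dtm1c -!dcA.
have E := nw _ _ _ _ (cid X) (casc Y Z W); rewrite fmid in E.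
by rewrite (dc_rw _ (esym E)) -fmc -cpent fmc.
Qed.

Lemma pair_b : D1 w (Rf t u) X Y Z W = D3 t (Lf w u) X Y Z W.
Proof.
rewrite /D1 /D3 /Rf /Lf -!dcA.
have E := dasc_nat (did (FO X)) (did (FO Y)) (t Z W); rewrite dtm11 in E.
by rewrite (dc_rw _ (esym E)) (dc_rw _ (xch _ _)).
Qed.

Lemma pair_d : D4 w (Lf t u) X Y Z W = D1 t (Lf u w) X Y Z W.
Proof.
rewrite /D4 /D1 /Lf !dtmc1 -!dcA.
rewrite !dcA -(dcA (dtm _ _)) -dpent -!dcA.
have E := dasc_nat (t X Y) (did (FO Z)) (did (FO W)); rewrite dtm11 in E.
by rewrite (dc_rw _ E).
Qed.

Lemma pair_e : natural2 u -> D2 w (Lf t u) X Y Z W = D4 u (Rf w t) X Y Z W.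
Proof.
move=> nu; rewrite /D2 /D4 /Lf /Rf !dtmc1 -!dcA.
have E := nu _ _ _ _ (casc X Y Z) (cid W); rewrite fmid in E.
rewrite E.
have E2 := dasc_nat (did (FO X)) (w Y Z) (did (FO W)).
by rewrite (dc_rw _ (esym E2)).
Qed.

End Pairs.


Definition Afam (s : nat -> fam2 F) (m : nat) : fam3 F := fun X Y Z =>
  \sum_(j < m.+1) Lf (s j) (s (m - j)%N) X Y Z - \sum_(j < m.+1) Rf (s j) (s (m - j)%N) X Y Z.

Section Lin.
Variables (w : fam2 F) (m : nat) (P1 P2 : nat -> fam3 F) (X Y Z W : sob C).
Let P : fam3 F := fun X Y Z => \sum_(j < m) P1 j X Y Z - \sum_(j < m) P2 j X Y Z.

Ltac linr := rewrite ?(dtmBr, dtmBl, dtm_sumr, dtm_suml, dcBl, dcBr, dc_sumr, dc_suml).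

Lemma D0_lin : D0 w P X Y Z W = \sum_(j < m) D0 w (P1 j) X Y Z W - \sum_(j < m) D0 w (P2 j) X Y Z W.
Proof. by rewrite /D0 /P; linr. Qed.
Lemma D1_lin : D1 w P X Y Z W = \sum_(j < m) D1 w (P1 j) X Y Z W - \sum_(j < m) D1 w (P2 j) X Y Z W.
Proof. by rewrite /D1 /P; linr. Qed.
Lemma D2_lin : D2 w P X Y Z W = \sum_(j < m) D2 w (P1 j) X Y Z W - \sum_(j < m) D2 w (P2 j) X Y Z W.
Proof. by rewrite /D2 /P; linr. Qed.
Lemma D3_lin : D3 w P X Y Z W = \sum_(j < m) D3 w (P1 j) X Y Z W - \sum_(j < m) D3 w (P2 j) X Y Z W.
Proof. by rewrite /D3 /P; linr. Qed.
Lemma D4_lin : D4 w P X Y Z W = \sum_(j < m) D4 w (P1 j) X Y Z W - \sum_(j < m) D4 w (P2 j) X Y Z W.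
Proof. by rewrite /D4 /P; linr. Qed.

Lemma Dg_lin : Dg w P X Y Z W = \sum_(j < m) (Dg w (P1 j) X Y Z W - Dg w (P2 j) X Y Z W).
Proof.
rewrite {1}/Dg D0_lin D1_lin D2_lin D3_lin D4_lin L1 /Dg.
by rewrite !(sumrB, sumrDD).
Qed.
End Lin.

Lemma eq_Sig (V : zmodType) N (f g : nat -> nat -> nat -> V) :
  (forall i j k, f i j k = g i j k) -> Sig N f = Sig N g.
Proof.
move=> h; rewrite /Sig; apply: eq_bigr => i _; apply: eq_bigr => j _; apply: eq_bigr => k _.
by rewrite h.
Qed.

Lemma bianchi N (s : nat -> fam2 F) : (forall i, natural2 (s i)) -> forall X Y Z W,
  \sum_(i < N.+1) Dg (s i) (Afam s (N - i)) X Y Z W = 0.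
Proof.
move=> ns X Y Z W.
have E : forall i : 'I_N.+1, Dg (s i) (Afam s (N - i)) X Y Z W =
   \sum_(j < (N - i).+1) (Dg (s i) (Lf (s j) (s (N - i - j)%N)) X Y Z W
                         - Dg (s i) (Rf (s j) (s (N - i - j)%N)) X Y Z W).
  move=> i; exact: (Dg_lin (s i) (N - i).+1 (fun j => Lf (s j) (s (N - i - j)%N))
                                          (fun j => Rf (s j) (s (N - i - j)%N))).
rewrite (eq_bigr _ (fun i _ => E i)).
rewrite (@Sig_conv _ N (fun i j k => Dg (s i) (Lf (s j) (s k)) X Y Z W
                                - Dg (s i) (Rf (s j) (s k)) X Y Z W)).
rewrite /Dg !(Sig_B, Sig_D).
apply: L2.
- rewrite (@eq_Sig _ N _ (fun i j k => (fun a b c => D3 (s a) (Rf (s b) (s c)) X Y Z W) j k i)).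
    exact: Sig_cyc.
  by move=> i j k; apply: pair_a.
- rewrite (@eq_Sig _ N _ (fun i j k => (fun a b c => D3 (s a) (Lf (s b) (s c)) X Y Z W) j i k)).
    exact: Sig_swap.
  by move=> i j k; apply: pair_b.
- rewrite (@eq_Sig _ N _ (fun i j k => (fun a b c => D2 (s a) (Rf (s b) (s c)) X Y Z W) j k i)).
    exact: Sig_cyc.
  by move=> i j k; apply: pair_c.
- rewrite (@eq_Sig _ N _ (fun i j k => (fun a b c => D1 (s a) (Lf (s b) (s c)) X Y Z W) j k i)).
    exact: Sig_cyc.
  by move=> i j k; apply: pair_d.
- rewrite (@eq_Sig _ N _ (fun i j k => (fun a b c => D4 (s a) (Rf (s b) (s c)) X Y Z W) k i j)).
    exact: (esym (@Sig_cyc _ N (fun a b c => D4 (s c) (Rf (s a) (s b)) X Y Z W))).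
  by move=> i j k; apply: pair_e.
Qed.

Definition zero2 : fam2 F := fun X Y => 0.
Definition trunc (psi : nat -> fam2 F) (N : nat) : nat -> fam2 F :=
  fun k => if (k < N)%N then psi k else zero2.
Definition upd (psi : nat -> fam2 F) (N : nat) (q : fam2 F) : nat -> fam2 F :=
  fun k => if k == N then q else psi k.
Definition obs (psi : nat -> fam2 F) (N : nat) : fam3 F := Afam (defseq (trunc psi N)) N.

Lemma nat_zero2 : natural2 zero2.
Proof. by move=> X Y X' Y' f g; rewrite /zero2 dc0l dc0r. Qed.

Lemma natL u v : natural2 u -> natural2 v -> natural3 (Lf u v).
Proof.
move=> nu nv X Y Z X' Y' Z' f g h; rewrite /Lf -!dcA nv.
have E1 : dc (dtm (u X' Y') (did (FO Z'))) (dtm (FM (ctm f g)) (FM h))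
        = dc (dtm (dtm (FM f) (FM g)) (FM h)) (dtm (u X Y) (did (FO Z))).
  by rewrite -!dtmc nu dc1l dc1r.
by rewrite (dc_rw _ E1) (dc_rw _ (dasc_nat _ _ _)).
Qed.

Lemma natR u v : natural2 u -> natural2 v -> natural3 (Rf u v).
Proof.
move=> nu nv X Y Z X' Y' Z' f g h; rewrite /Rf -!dcA -fmc casc_nat fmc (dcA (v _ _)) nv -dcA.
have E1 : dc (dtm (did (FO X')) (u Y' Z')) (dtm (FM f) (FM (ctm g h)))
        = dc (dtm (FM f) (dtm (FM g) (FM h))) (dtm (did (FO X)) (u Y Z)).
  by rewrite -!dtmc nu dc1l dc1r.
by rewrite (dc_rw _ E1).
Qed.

Lemma nat_sumB m (P1 P2 : nat -> fam3 F) :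
  (forall j, natural3 (P1 j)) -> (forall j, natural3 (P2 j)) ->
  natural3 (fun X Y Z => \sum_(j < m) P1 j X Y Z - \sum_(j < m) P2 j X Y Z).
Proof.
move=> n1 n2 X Y Z X' Y' Z' f g h.
rewrite dcBl dcBr !dc_suml !dc_sumr; congr (_ - _); apply: eq_bigr => j _.
  exact: n1.
exact: n2.
Qed.

Lemma nat_Afam s m : (forall i, natural2 (s i)) -> natural3 (Afam s m).
Proof.
move=> ns; apply: (@nat_sumB m.+1 (fun j => Lf (s j) (s (m - j)%N))
                            (fun j => Rf (s j) (s (m - j)%N))) => j.
  exact: natL.
exact: natR.
Qed.

Lemma Dg_zero w (P : fam3 F) : (forall X Y Z, P X Y Z = 0) -> forall X Y Z W, Dg w P X Y Z W = 0.
Proof.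
move=> hP X Y Z W; rewrite /Dg /D0 /D1 /D2 /D3 /D4 !hP.
by rewrite ?(dtm0l, dtm0r, dc0l, dc0r) !subr0 !addr0.
Qed.

Lemma hex_ext (s s' : nat -> fam2 F) m :
  (forall j, (j <= m)%N -> s j = s' j) -> hex_coef s m -> hex_coef s' m.
Proof.
move=> e h X Y Z; have := h X Y Z.
rewrite (eq_bigr (fun i : 'I_m.+1 => dc (dasc (FO X) (FO Y) (FO Z))
          (dc (dtm (s' i X Y) (did (FO Z))) (s' (m - i)%N (ct X Y) Z)))); last first.
  by move=> i _; rewrite !e // ?leq_subr // -ltnS.
rewrite [in X in _ = X -> _](eq_bigr (fun i : 'I_m.+1 => dc (dtm (did (FO X)) (s' i Y Z))
          (dc (s' (m - i)%N X (ct Y Z)) (FM (casc X Y Z))))) //.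
by move=> i _; rewrite !e // ?leq_subr // -ltnS.
Qed.

Lemma hex_Afam s m : hex_coef s m -> forall X Y Z, Afam s m X Y Z = 0.
Proof. by move=> h X Y Z; rewrite /Afam; apply/eqP; rewrite subr_eq0; apply/eqP; apply: h. Qed.

Lemma cocycle n (psi : nat -> fam2 F) : is_deformation n psi ->
  forall X Y Z W, delta3 (obs psi n.+1) X Y Z W = 0.
Proof.
move=> [nat_psi hex_psi] X Y Z W.
set s := defseq (trunc psi n.+1).
have ns : forall i, natural2 (s i).
  case=> [|i]; first exact: ft_nat.
  rewrite /s /= /trunc; case: ifP => hi; last exact: nat_zero2.
  by apply: nat_psi; rewrite ltnS in hi.
have := bianchi n.+1 ns X Y Z W.
rewrite big_ord_recl big1 ?addr0 //.
move=> i _; apply: Dg_zero; apply: hex_Afam.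
have hm : (n.+1 - (lift ord0 i) <= n)%N by rewrite /= /bump /=; lia.
apply: (hex_ext (s := defseq psi)); last exact: hex_psi.
case=> [|j] hj //=; rewrite /trunc; have -> : (j.+1 < n.+1)%N by lia.
by [].
Qed.

Lemma Lf_0r u X Y Z : Lf u zero2 X Y Z = 0.
Proof. by rewrite /Lf /zero2 !dc0r. Qed.
Lemma Lf_0l v X Y Z : Lf zero2 v X Y Z = 0.
Proof. by rewrite /Lf /zero2 dtm0l dc0l dc0r. Qed.
Lemma Rf_0r u X Y Z : Rf u zero2 X Y Z = 0.
Proof. by rewrite /Rf /zero2 dc0l dc0r. Qed.
Lemma Rf_0l v X Y Z : Rf zero2 v X Y Z = 0.
Proof. by rewrite /Rf /zero2 dtm0r dc0l. Qed.

Lemma Afam_hex s m : (forall X Y Z, Afam s m X Y Z = 0) -> hex_coef s m.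
Proof. by move=> h X Y Z; apply/eqP; rewrite -subr_eq0; apply/eqP; apply: h. Qed.

Lemma extend_step n (psi : nat -> fam2 F) (q : fam2 F) :
  is_deformation n psi -> natural2 q ->
  (forall X Y Z, delta2 q X Y Z = obs psi n.+1 X Y Z) ->
  is_deformation n.+1 (upd psi n.+1 q).
Proof.
move=> [nat_psi hex_psi] nq hq; split.
  move=> k /andP [k0 kn]; rewrite /upd; case: eqP => // hk.
  by apply: nat_psi; apply/andP; split => //; lia.
move=> m hm; have [hlt|->] : (m < n.+1)%N \/ m = n.+1 by lia.
  apply: (hex_ext (s := defseq psi)); last by apply: hex_psi; lia.
  case=> [|j] hj //=; rewrite /upd; have -> : (j.+1 == n.+1) = false by apply/eqP; lia.
  by [].
apply: Afam_hex => X Y Z.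
have e : forall k, (k < n.+1)%N -> defseq (upd psi n.+1 q) k = defseq (trunc psi n.+1) k.
  case=> [|k] hk //=; rewrite /upd /trunc hk.
  by have -> : (k.+1 == n.+1) = false by apply/eqP; lia.
have := hq X Y Z; rewrite /obs /Afam.
rewrite (@peel _ n (fun j => Lf (defseq (trunc psi n.+1) j) (defseq (trunc psi n.+1) (n.+1 - j)) X Y Z)).
rewrite (@peel _ n (fun j => Rf (defseq (trunc psi n.+1) j) (defseq (trunc psi n.+1) (n.+1 - j)) X Y Z)).
rewrite (@peel _ n (fun j => Lf (defseq (upd psi n.+1 q) j) (defseq (upd psi n.+1 q) (n.+1 - j)) X Y Z)).
rewrite (@peel _ n (fun j => Rf (defseq (upd psi n.+1 q) j) (defseq (upd psi n.+1 q) (n.+1 - j)) X Y Z)).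
have eL : \sum_(i < n) Lf (defseq (upd psi n.+1 q) i.+1) (defseq (upd psi n.+1 q) (n.+1 - i.+1)%N) X Y Z
        = \sum_(i < n) Lf (defseq (trunc psi n.+1) i.+1) (defseq (trunc psi n.+1) (n.+1 - i.+1)%N) X Y Z.
  by apply: eq_bigr => i _; move: (ltn_ord i) => hi; rewrite !e //; lia.
have eR : \sum_(i < n) Rf (defseq (upd psi n.+1 q) i.+1) (defseq (upd psi n.+1 q) (n.+1 - i.+1)%N) X Y Z
        = \sum_(i < n) Rf (defseq (trunc psi n.+1) i.+1) (defseq (trunc psi n.+1) (n.+1 - i.+1)%N) X Y Z.
  by apply: eq_bigr => i _; move: (ltn_ord i) => hi; rewrite !e //; lia.
rewrite eL eR subn0 subnn /= /upd /trunc eqxx ltnn.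
rewrite Lf_0r Lf_0l Rf_0r Rf_0l.
exact: L3.
Qed.

Lemma nat_trunc n (psi : nat -> fam2 F) : is_deformation n psi ->
  forall i, natural2 (defseq (trunc psi n.+1) i).
Proof.
move=> [nat_psi _]; case=> [|i]; first exact: ft_nat.
rewrite /= /trunc; case: ifP => hi; last exact: nat_zero2.
by apply: nat_psi; rewrite ltnS in hi.
Qed.

Lemma deform_ext n (psi psi' : nat -> fam2 F) :
  (forall j, (j <= n)%N -> psi j = psi' j) -> is_deformation n psi -> is_deformation n psi'.
Proof.
move=> e [np hp]; split.
  by move=> k /andP [k0 kn]; rewrite -e //; apply: np; rewrite k0.
move=> m hm; apply: (hex_ext (s := defseq psi)); last exact: hp.
by case=> [|j] hj //=; rewrite e //; lia.
Qed.

Lemma deform_mono n (psi : nat -> fam2 F) : is_deformation n.+1 psi -> is_deformation n psi.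
Proof.
move=> [np hp]; split.
  by move=> k /andP [k0 kn]; apply: np; rewrite k0; lia.
by move=> m hm; apply: hp; lia.
Qed.

Section Build.
Variables (PX : fam3 F -> Prop) (QX : fam2 F -> Prop).
Variable H3g : forall p, natural3 p -> PX p -> (forall X Y Z W, delta3 p X Y Z W = 0) ->
  exists q, natural2 q /\ QX q /\ (forall X Y Z, delta2 q X Y Z = p X Y Z).
Variable HPX : forall n (psi : nat -> fam2 F), (forall k, (0 < k <= n)%N -> QX (psi k)) ->
  is_deformation n psi -> PX (obs psi n.+1).
Variable phi : fam2 F.
Variable hphi : is_first_order phi.
Variable qphi : QX phi.

Definition goodq (p : fam3 F) (q : fam2 F) :=
  natural2 q /\ QX q /\ (forall X Y Z, delta2 q X Y Z = p X Y Z).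
Definition chq (p : fam3 F) : fam2 F := epsilon (inhabits zero2) (goodq p).

Fixpoint build (k : nat) : nat -> fam2 F :=
  match k with
  | 0 => fun _ => phi
  | k'.+1 => upd (build k') k'.+2 (chq (obs (build k') k'.+2))
  end.

Lemma build_inv k : is_deformation k.+1 (build k) /\ (forall j, (0 < j <= k.+1)%N -> QX (build k j)).
Proof.
elim: k => [|k [hd hq]].
  by split => // j /andP [j0 j1].
have hex : exists q, goodq (obs (build k) k.+2) q.
  apply: H3g.
  - by apply: nat_Afam; apply: (nat_trunc hd).
  - exact: HPX.
  - exact: (cocycle hd).
have := epsilon_spec (inhabits zero2) _ hex; rewrite -/(chq _) => [[g1 [g2 g3]]].
split; first exact: extend_step.
move=> j hj /=; rewrite /upd; case: eqP => // hjk.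
by apply: hq; lia.
Qed.

Lemma build_stable k j d : (j <= k.+1)%N -> build (k + d) j = build k j.
Proof.
move=> hj; elim: d => [|d IH]; first by rewrite addn0.
by rewrite addnS /= /upd; have -> : (j == (k + d).+2) = false by apply/eqP; lia.
Qed.

Lemma build_series : exists psi : nat -> fam2 F, extends phi psi /\
  (forall n, is_deformation n psi /\ (forall k, (0 < k <= n)%N -> QX (psi k))).
Proof.
exists (fun j => build j j); split; first by [].
move=> n; have e : forall j, (j <= n)%N -> build n j = build j j.
  by move=> j hj; rewrite -(subnKC hj) build_stable.
have [hd hq] := build_inv n; split.
  by apply: (deform_ext e); apply: deform_mono.
by move=> k hk; rewrite -e; [apply: hq; lia | lia].
Qed.
End Build.

End Basics.


Section Proper.
Variable K : fieldType.
Variable C0 : MonCat.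
Variable D : LinMonCat K.
Variable F0 : MonFunctor C0 D.

Local Notation DH := (@lhom K D).
Local Notation dc := (Defs.comp (msemi (ldat D))).
Local Notation did := (idm (msemi (ldat D))).
Local Notation dtm := (tensm (msemi (ldat D))).
Local Notation FS := (mfs F0).
Local Notation I := (Defs.unit (mdat C0)).

Lemma proper_phi (phi : fam2 FS) : is_proper_first_order phi -> proper2 phi.
Proof.
move=> [_ hu]; have [hl hr] := hu 1%N isT.
case: (llaws D) => [_ [lul [_ [rur _]]]].
split.
- move=> A; have h := hl A.
  have -> : phi I A = dc (dtm (f0i F0) (did _)) (dc (lui (ldat D) _)
                 (dc (lu (ldat D) _) (dc (dtm (f0 F0) (did _)) (phi I A)))).
    by rewrite (dcA (lui _ _)) lul dc1l dcA -dtmc f0_inv1 dc1l dtm11 dc1l.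
  by rewrite h !dc0r.
- move=> A; have h := hr A.
  have -> : phi A I = dc (dtm (did _) (f0i F0)) (dc (rui (ldat D) _)
                 (dc (ru (ldat D) _) (dc (dtm (did _) (f0 F0)) (phi A I)))).
    by rewrite (dcA (rui _ _)) rur dc1l dcA -dtmc f0_inv1 dc1l dtm11 dc1l.
  by rewrite h !dc0r.
Qed.

Lemma unit_of_proper (psi : nat -> fam2 FS) k : proper2 (psi k) -> unit_coef psi k.
Proof. by move=> [h1 h2]; split => A; rewrite ?h1 ?h2 !dc0r. Qed.

Lemma proper_obs n (psi : nat -> fam2 FS) :
  (forall k, (0 < k <= n)%N -> proper2 (psi k)) -> proper3 (obs psi n.+1).
Proof.
move=> hp.
set s := defseq (trunc psi n.+1).
have sN : forall X Y, s n.+1 X Y = 0.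
  by move=> X Y; rewrite /s /= /trunc ltnn.
have sz : forall j, (0 < j)%N -> (forall Y, s j I Y = 0) /\ (forall X, s j X I = 0).
  case=> [|j] // _; rewrite /s /= /trunc; case: ifP => hj; last by [].
  by apply: hp; rewrite ltnS in hj.
have L0u : forall (u v : fam2 FS) (X Y Z : mob C0), u X Y = 0 -> Lf u v X Y Z = 0.
  by move=> u v X Y Z h; rewrite /Lf h dtm0l dc0l dc0r.
have L0v : forall (u v : fam2 FS) (X Y Z : mob C0), v (tens (msemi (mdat C0)) X Y) Z = 0 -> Lf u v X Y Z = 0.
  by move=> u v X Y Z h; rewrite /Lf h !dc0r.
have R0u : forall (u v : fam2 FS) (X Y Z : mob C0), u Y Z = 0 -> Rf u v X Y Z = 0.
  by move=> u v X Y Z h; rewrite /Rf h dtm0r dc0l.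
have R0v : forall (u v : fam2 FS) (X Y Z : mob C0), v X (tens (msemi (mdat C0)) Y Z) = 0 -> Rf u v X Y Z = 0.
  by move=> u v X Y Z h; rewrite /Rf h dc0l dc0r.
rewrite /obs /Afam -/s; clearbody s; split; [|split].
- move=> Y Z; rewrite big1 ?[T in _ - T]big1 ?subr0 //.
  + case=> [[|j] hj] _ /=.
      by apply: R0v; rewrite subn0 sN.
    have [->|hjn] : j.+1 = n.+1 \/ (j.+1 < n.+1)%N by lia.
      by apply: R0u; rewrite sN.
    by apply: R0v; apply: (proj1 (sz _ _)); lia.
  + case=> [[|j] hj] _ /=.
      by apply: L0v; rewrite subn0 sN.
    by apply: L0u; apply: (proj1 (sz _ _)).
- move=> X Z; rewrite big1 ?[T in _ - T]big1 ?subr0 //.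
  + case=> [[|j] hj] _ /=.
      by apply: R0v; rewrite subn0 sN.
    by apply: R0u; apply: (proj1 (sz _ _)).
  + case=> [[|j] hj] _ /=.
      by apply: L0v; rewrite subn0 sN.
    by apply: L0u; apply: (proj2 (sz _ _)).
- move=> X Y; rewrite big1 ?[T in _ - T]big1 ?subr0 //.
  + case=> [[|j] hj] _ /=.
      by apply: R0v; rewrite subn0 sN.
    by apply: R0u; apply: (proj2 (sz _ _)).
  + case=> [[|j] hj] _ /=.
      by apply: L0v; rewrite subn0 sN.
    have [->|hjn] : j.+1 = n.+1 \/ (j.+1 < n.+1)%N by lia.
      by apply: L0u; rewrite sN.
    by apply: L0v; apply: (proj2 (sz _ _)); lia.
Qed.

End Proper.

Theorem mainTheorem5 :
  (forall (K : fieldType) (C : SemiCat) (D : LinMonCat K) (F : SemiFunctor C D),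
      H3_vanishes F ->
      forall phi : fam2 F, is_first_order phi ->
        (forall n : nat, exists psi : nat -> fam2 F,
            extends phi psi /\ is_deformation n psi) /\
        (exists psi : nat -> fam2 F,
            extends phi psi /\ is_series_deformation psi)) /\
  (forall (K : fieldType) (C : MonCat) (D : LinMonCat K) (F : MonFunctor C D),
      properH3_vanishes F ->
      forall phi : fam2 (mfs F), is_proper_first_order phi ->
        exists psi : nat -> fam2 (mfs F),
          extends phi psi /\ is_proper_series_deformation psi).
Proof.
split.
- move=> K C D F H3 phi hphi.
  have [psi [he hd]] := @build_series K C D F (fun _ => True) (fun _ => True)
    (fun p np _ hc => match H3 p np hc with ex_intro q (conj nq hq) =>
                        ex_intro _ q (conj nq (conj I hq)) end)
    (fun _ _ _ _ => I) phi hphi I.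
  split.
    by move=> n; exists psi; split => //; exact: (proj1 (hd n)).
  by exists psi; split => // n; exact: (proj1 (hd n)).
- move=> K C D F H3 phi hphi.
  have [psi [he hd]] := @build_series K (semi_of C) D (mfs F) (@proper3 K C D F) (@proper2 K C D F)
    H3 (fun n psi hq _ => proper_obs hq) phi (proj1 hphi) (proper_phi hphi).
  exists psi; split => // n; split; first exact: (proj1 (hd n)).
  by move=> k hk; apply: unit_of_proper; exact: (proj2 (hd n) k hk).
Qed.
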